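(* Let $\epsilon>0$, $\beta\ge 0$, let $M\ge 4$ be an even integer and $N\ge 3$ an integer, and let $\mathcal A$ be the upwind Shishkin-mesh matrix described in the context. Then all nonzero $(N-1)\times(N-1)$ blocks of $\mathcal A$ (namely $A_H,A,A_h,B_H,B,B_h,C_H,C,C_h$) are nonsingular. Moreover, with respect to the matrix $\infty$-norm, \[ \|A_H^{-1}B_H\|_\infty+\|A_H^{-1}C_H\|_\infty\le 1,\quad \|A^{-1}B\|_\infty+\|A^{-1}C\|_\infty\le 1,\quad \|A_h^{-1}B_h\|_\infty+\|A_h^{-1}C_h\|_\infty\le 1, \] and \[ \|B_HA_H^{-1}\|_\infty+\|C_HA_H^{-1}\|_\infty\le 1,\quad \|B_hA_h^{-1}\|_\infty+\|C_hA_h^{-1}\|_\infty\le 1. \]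
   Context: Setting (upwind finite differences on a Shishkin mesh for $-\epsilon\Delta u+u_y+\beta u=f$ on $(0,1)^2$ with Dirichlet data, lexicographic line ordering): let $\tau_y=\min\{1/2,\,2\epsilon\ln M\}$, $H_x=1/N$, $H_y=2(1-\tau_y)/M$, $h_y=2\tau_y/M$, and $m=M/2-1$. Define the scalars $d_H=-\frac{\epsilon}{H_y^2}-\frac1{H_y}$, $d=-\frac{2\epsilon}{H_y(H_y+h_y)}-\frac1{H_y}$, $d_h=-\frac{\epsilon}{h_y^2}-\frac1{h_y}$, $e_H=-\frac{\epsilon}{H_y^2}$, $e=-\frac{2\epsilon}{h_y(H_y+h_y)}$, $e_h=-\frac{\epsilon}{h_y^2}$, and $a_H=\frac{2\epsilon}{H_x^2}+\frac{2\epsilon}{H_y^2}+\frac1{H_y}+\beta$, $a=\frac{2\epsilon}{H_x^2}+\frac{2\epsilon}{H_yh_y}+\frac1{H_y}+\beta$, $a_h=\frac{2\epsilon}{H_x^2}+\frac{2\epsilon}{h_y^2}+\frac1{h_y}+\beta$. With $I$ the identity of size $N-1$, let $C_H=d_HI$, $C=dI$, $C_h=d_hI$, $B_H=e_HI$, $B=eI$, $B_h=e_hI$, and let $A_H$, $A$, $A_h$ be the $(N-1)\times(N-1)$ tridiagonal Toeplitz matrices with off-diagonal entries $-\epsilon/H_x^2$ (both sub- and superdiagonal) and diagonal entries $a_H$, $a$, $a_h$, respectively. Let $\hat A_H$ (resp. $\hat A_h$) be the $m\times m$ block tridiagonal matrix with diagonal blocks $A_H$ (resp. $A_h$), subdiagonal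 blocks $C_H$ (resp. $C_h$) and superdiagonal blocks $B_H$ (resp. $B_h$). Then $\mathcal A=\begin{bmatrix}\hat A_H & e_m\otimes B_H & 0\\ e_m^{T}\otimes C & A & e_1^{T}\otimes B\\ 0 & e_1\otimes C_h & \hat A_h\end{bmatrix}$ of size $(N-1)(M-1)$, where $e_1,e_m$ are the first and last canonical basis vectors of $\mathbb R^m$ and $\otimes$ is the Kronecker product. *)

(* Defs.v *)
From HB Require Import structures.
From mathcomp Require Import all_boot all_order all_algebra.
From mathcomp Require Import reals exp.
Set Implicit Arguments. Unset Strict Implicit. Unset Printing Implicit Defensive.
Import Order.TTheory GRing.Theory Num.Theory.
Local Open Scope ring_scope.

Section Shishkin.
Variable R : realType.

Definition mx_norm_inf (m n : nat) (A : 'M[R]_(m, n)) : R :=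
  \big[Num.max/0]_(i < m) \sum_(j < n) `|A i j|.

Definition tridiag (n : nat) (dg off : R) : 'M[R]_n :=
  \matrix_(i < n, j < n)
     if i == j then dg
     else if (i.+1 == j :> nat) || (j.+1 == i :> nat) then off else 0.

Variables (eps beta : R) (M N : nat).

Definition tau_y : R := Num.min (1 / 2) (2 * eps * ln (M%:R)).
Definition Hx : R := 1 / N%:R.
Definition Hy : R := 2 * (1 - tau_y) / M%:R.
Definition hy : R := 2 * tau_y / M%:R.

Definition d_H : R := - (eps / Hy ^+ 2) - 1 / Hy.
Definition d_ : R := - (2 * eps / (Hy * (Hy + hy))) - 1 / Hy.
Definition d_h : R := - (eps / hy ^+ 2) - 1 / hy.
Definition e_H : R := - (eps / Hy ^+ 2).
Definition e_ : R := - (2 * eps / (hy * (Hy + hy))).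
Definition e_h : R := - (eps / hy ^+ 2).
Definition a_H : R := 2 * eps / Hx ^+ 2 + 2 * eps / Hy ^+ 2 + 1 / Hy + beta.
Definition a_ : R := 2 * eps / Hx ^+ 2 + 2 * eps / (Hy * hy) + 1 / Hy + beta.
Definition a_h : R := 2 * eps / Hx ^+ 2 + 2 * eps / hy ^+ 2 + 1 / hy + beta.

Definition offd : R := - (eps / Hx ^+ 2).

Definition blkA_H : 'M[R]_(N.-1) := tridiag N.-1 a_H offd.
Definition blkA : 'M[R]_(N.-1) := tridiag N.-1 a_ offd.
Definition blkA_h : 'M[R]_(N.-1) := tridiag N.-1 a_h offd.
Definition blkB_H : 'M[R]_(N.-1) := e_H%:M.
Definition blkB : 'M[R]_(N.-1) := e_%:M.
Definition blkB_h : 'M[R]_(N.-1) := e_h%:M.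
Definition blkC_H : 'M[R]_(N.-1) := d_H%:M.
Definition blkC : 'M[R]_(N.-1) := d_%:M.
Definition blkC_h : 'M[R]_(N.-1) := d_h%:M.

End Shishkin.

(* Main.v *)
Require Import Defs.
From HB Require Import structures.
From mathcomp Require Import all_boot all_order all_algebra.
From mathcomp Require Import ring lra.
From mathcomp Require Import reals exp.
Import Order.TTheory GRing.Theory Num.Theory.
Local Open Scope ring_scope.

Section Gen.
Variable R : realType.

Lemma dd_lower n (A : 'M[R]_n) (dl : R) :
  0 <= dl ->
  (forall i, dl + \sum_(j | j != i) `|A i j| <= `|A i i|) ->
  forall (y : 'cV_n) c, (forall i, `|(A *m y) i 0| <= c) ->
  forall k, dl * `|y k 0| <= c.
Proof.
move=> dl0 HA y c Hc k.
have [i _ Hi] := @arg_maxP _ R _ k xpredT (fun i => `|y i 0|) isT.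
apply: le_trans (Hc i).
rewrite mxE (bigD1 i) //=.
apply: le_trans (lerB_normD _ _).
have Hs : `|\sum_(j | j != i) A i j * y j 0| <= (\sum_(j | j != i) `|A i j|) * `|y i 0|.
  apply: le_trans (ler_norm_sum _ _ _) _.
  rewrite mulr_suml; apply: ler_sum => j _.
  by rewrite normrM ler_wpM2l //; apply: Hi.
have Hk : `|y k 0| <= `|y i 0| := Hi k isT.
have := HA i.
rewrite normrM.
set S := \sum_(j | j != i) `|A i j|.
set T := `|\sum_(j | j != i) A i j * y j 0|.
move=> HAi.
have Hy0 : 0 <= `|y i 0| by [].
have : dl * `|y k 0| <= dl * `|y i 0| by rewrite ler_wpM2l.
have : (dl + S) * `|y i 0| <= `|A i i| * `|y i 0| by rewrite ler_wpM2r.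
rewrite mulrDl.
move: Hs; rewrite -/S -/T => Hs.
lra.
Qed.


Lemma dd_unit n (A : 'M[R]_n) (dl : R) :
  0 < dl ->
  (forall i, dl + \sum_(j | j != i) `|A i j| <= `|A i i|) -> A \in unitmx.
Proof.
move=> dl0 HA; rewrite -unitmx_tr unitmxE unitfE; apply/negP => /det0P [v vn0 Hv].
have H0 : A *m v^T = 0 by rewrite -[A]trmxK -trmx_mul Hv trmx0.
have Hk := @dd_lower n A dl (ltW dl0) HA v^T 0.
move/negP: vn0; apply; apply/eqP/matrixP => a b; rewrite !mxE.
have : dl * `|v^T b 0| <= 0 by apply: Hk => i; rewrite H0 mxE normr0.
rewrite mxE (ord1 a) pmulr_rle0 // normr_le0 => /eqP //.
Qed.

Lemma dd_inv_row n (A : 'M[R]_n) (dl : R) :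
  0 < dl ->
  (forall i, dl + \sum_(j | j != i) `|A i j| <= `|A i i|) ->
  forall i, \sum_j `|invmx A i j| <= dl^-1.
Proof.
move=> dl0 HA i.
have Au := @dd_unit n A dl dl0 HA.
set Y := invmx A.
pose x : 'cV[R]_n := \col_j (if 0 <= Y i j then 1 else -1).
have Hx : forall j, `|x j 0| <= 1.
  by move=> j; rewrite mxE; case: ifP; rewrite ?normrN normr1.
have HAy : A *m (Y *m x) = x by rewrite mulmxA mulmxV // mul1mx.
have := @dd_lower n A dl (ltW dl0) HA (Y *m x) 1.
rewrite HAy => /(_ Hx i).
have -> : (Y *m x) i 0 = \sum_j `|Y i j|.
  rewrite mxE; apply: eq_bigr => j _; rewrite mxE.
  case: ifP => h; first by rewrite mulr1 ger0_norm.
  by rewrite mulrN1 ler0_norm // ltW // ltNge h.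
move=> h.
rewrite ger0_norm in h; last by apply: sumr_ge0.
by rewrite -(ler_pM2l dl0) mulfV ?gt_eqF.
Qed.

Lemma mx_norm_inf_le m n (X : 'M[R]_(m, n)) c :
  0 <= c -> (forall i, \sum_j `|X i j| <= c) -> mx_norm_inf X <= c.
Proof.
move=> c0 H; rewrite /mx_norm_inf.
elim/big_ind: _ => //.
by move=> x y hx hy; rewrite ge_max hx hy.
Qed.

Lemma dd_final n (A : 'M[R]_n) (dl e d : R) :
  0 < dl ->
  (forall i, dl + \sum_(j | j != i) `|A i j| <= `|A i i|) ->
  `|e| + `|d| <= dl ->
  mx_norm_inf (e *: invmx A) + mx_norm_inf (d *: invmx A) <= 1.
Proof.
move=> dl0 HA Hed.
have Hs := @dd_inv_row n A dl dl0 HA.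
have Hb : forall f, mx_norm_inf (f *: invmx A) <= `|f| * dl^-1.
  move=> f; apply: mx_norm_inf_le.
    by rewrite mulr_ge0 // invr_ge0 ltW.
  move=> i; under eq_bigr => j _ do rewrite mxE normrM.
  by rewrite -mulr_sumr ler_wpM2l.
apply: le_trans (lerD (Hb e) (Hb d)) _.
rewrite -mulrDl -(mulfV (lt0r_neq0 dl0)) ler_wpM2r // invr_ge0 ltW //.
Qed.


Lemma sum_ind_le1 n (P : 'I_n -> bool) :
  (forall j1 j2, P j1 -> P j2 -> j1 = j2) -> \sum_j ((P j)%:R : R) <= 1.
Proof.
move=> HP; case: (pickP P) => [j0 Pj0 | none].
  rewrite (bigD1 j0) //= big1 ?Pj0 ?addr0 //.
  move=> j hj; case Pj: (P j) => //.
  by rewrite (HP _ _ Pj Pj0) eqxx in hj.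
by rewrite big1 // => j _; rewrite none.
Qed.

Lemma tridiag_dd n (a off : R) : 0 <= a ->
  forall i, (a - 2 * `|off|) + \sum_(j | j != i) `|tridiag n a off i j|
     <= `|tridiag n a off i i|.
Proof.
move=> a0 i.
rewrite mxE eqxx (ger0_norm a0).
set G := fun j : 'I_n => `|off| * (((i.+1 == j :> nat))%:R + ((j.+1 == i :> nat))%:R).
have H1 : \sum_(j | j != i) `|tridiag n a off i j| <= \sum_j G j.
  rewrite big_mkcond; apply: ler_sum => j _.
  case: ifP => hji.
    have hij : (i == j) = false by apply/negbTE; rewrite eq_sym.
    rewrite mxE hij /G.
    case: (i.+1 == j :> nat); case: (j.+1 == i :> nat) => /=;
      rewrite ?normr0 ?mulr1n ?mulr0n ?addr0 ?add0r ?mulr1 ?mulr0 //;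
      by have := normr_ge0 off; lra.
  by rewrite /G mulr_ge0 // addr_ge0.
have H2 : \sum_j G j <= 2 * `|off|.
  rewrite /G -mulr_sumr big_split /= mulrC ler_wpM2r //.
  have -> : (2 : R) = 1 + 1 by [].
  apply: lerD; apply: sum_ind_le1 => j1 j2.
    by move=> /eqP h1 /eqP h2; apply: val_inj; rewrite /= -h1 -h2.
  by move=> /eqP h1 /eqP h2; apply: val_inj => /=; apply: succn_inj; rewrite h1 h2.
lra.
Qed.


Lemma case_lemma n (a off e d : R) :
  0 <= a -> 0 < a - 2 * `|off| -> `|e| + `|d| <= a - 2 * `|off| ->
  e != 0 -> d != 0 ->
  let A := tridiag n a off in
  [/\ A \in unitmx, (e%:M : 'M_n) \in unitmx, (d%:M : 'M_n) \in unitmx,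
      mx_norm_inf (invmx A *m e%:M) + mx_norm_inf (invmx A *m d%:M) <= 1 &
      mx_norm_inf (e%:M *m invmx A) + mx_norm_inf (d%:M *m invmx A) <= 1].
Proof.
move=> a0 dl0 Hed e0 d0 A.
have HA := @tridiag_dd n a off a0.
split.
- exact: (@dd_unit n A _ dl0 HA).
- by rewrite unitmxE det_scalar unitfE expf_neq0.
- by rewrite unitmxE det_scalar unitfE expf_neq0.
- by rewrite !mul_mx_scalar; apply: (@dd_final n A _ e d dl0 HA).
- by rewrite !mul_scalar_mx; apply: (@dd_final n A _ e d dl0 HA).
Qed.

End Gen.

Lemma nnorm (R : realType) (x y : R) : 0 <= x -> 0 <= y -> `|-x - y| = x + y.
Proof. by move=> hx hy; rewrite -opprD normrN ger0_norm // addr_ge0. Qed.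

Theorem lemma5p1 (R : realType) (eps beta : R) (M N : nat) :
  0 < eps -> 0 <= beta -> ~~ odd M -> (4 <= M)%N -> (3 <= N)%N ->
  let AH := blkA_H eps beta M N in
  let A  := blkA eps beta M N in
  let Ah := blkA_h eps beta M N in
  let BH := blkB_H eps M N in
  let B  := blkB eps M N in
  let Bh := blkB_h eps M N in
  let CH := blkC_H eps M N in
  let C  := blkC eps M N in
  let Ch := blkC_h eps M N in
  [/\ [/\ AH \in unitmx, A \in unitmx & Ah \in unitmx],
      [/\ BH \in unitmx, B \in unitmx & Bh \in unitmx],
      [/\ CH \in unitmx, C \in unitmx & Ch \in unitmx],
      [/\ mx_norm_inf (invmx AH *m BH) + mx_norm_inf (invmx AH *m CH) <= 1,
          mx_norm_inf (invmx A *m B) + mx_norm_inf (invmx A *m C) <= 1 &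
          mx_norm_inf (invmx Ah *m Bh) + mx_norm_inf (invmx Ah *m Ch) <= 1] &
      mx_norm_inf (BH *m invmx AH) + mx_norm_inf (CH *m invmx AH) <= 1 /\
      mx_norm_inf (Bh *m invmx Ah) + mx_norm_inf (Ch *m invmx Ah) <= 1].
Proof.
move=> eps0 beta0 _ M4 N3; cbv zeta.
have M0 : (0 : R) < M%:R by rewrite ltr0n; apply: leq_trans M4.
have N0 : (0 : R) < N%:R by rewrite ltr0n; apply: leq_trans N3.
have tau0 : 0 < tau_y eps M.
  rewrite /tau_y lt_min; apply/andP; split; first by lra.
  by rewrite mulr_gt0 ?mulr_gt0 // ln_gt0 // ltr1n; apply: leq_trans M4.
have tau1 : tau_y eps M <= 1 / 2 by rewrite /tau_y ge_min lexx.
have p0 : 0 < Hy eps M by rewrite /Hy divr_gt0 // mulr_gt0 //; lra.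
have q0 : 0 < hy eps M by rewrite /hy divr_gt0 // mulr_gt0 //; lra.
have r0 : 0 < Hx R N by rewrite /Hx divr_gt0.
rewrite /blkA_H /blkA /blkA_h /blkB_H /blkB /blkB_h /blkC_H /blkC /blkC_h.
set p := Hy eps M in p0 *; set q := hy eps M in q0 *; set r := Hx R N in r0 *.
have s1 : 0 < eps / p ^+ 2 by rewrite divr_gt0 // exprn_gt0.
have s2 : 0 < eps / q ^+ 2 by rewrite divr_gt0 // exprn_gt0.
have s6 : 0 < eps / r ^+ 2 by rewrite divr_gt0 // exprn_gt0.
have s4 : 0 < 1 / p by rewrite divr_gt0.
have s5 : 0 < 1 / q by rewrite divr_gt0.
have e2 : 0 < 2 * eps by lra.
have s3 : 0 < 2 * eps / (q * (p + q)) by rewrite divr_gt0 // mulr_gt0 // addr_gt0.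
have s7 : 0 < 2 * eps / (p * (p + q)) by rewrite divr_gt0 // mulr_gt0 // addr_gt0.
have s8 : 0 < 2 * eps / (p * q) by rewrite divr_gt0 // mulr_gt0.
have k9 : 2 * eps / (q * (p + q)) + 2 * eps / (p * (p + q)) = 2 * eps / (p * q).
  by field; rewrite !lt0r_neq0 // addr_gt0.
have hoff : `|offd eps N| = eps / r ^+ 2 by rewrite /offd -/r normrN ger0_norm // ltW.
have c1 : a_H eps beta M N = 2*eps/r^+2 + 2*eps/p^+2 + 1/p + beta by rewrite /a_H -/p -/r.
have ce1 : `|e_H eps M| = eps/p^+2 by rewrite /e_H -/p normrN ger0_norm // ltW.
have cd1 : `|d_H eps M| = eps/p^+2 + 1/p by rewrite /d_H -/p nnorm // ltW.
have ne1 : e_H eps M != 0 by rewrite /e_H -/p ltr0_neq0 // oppr_lt0.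
have nd1 : d_H eps M != 0 by rewrite /d_H -/p ltr0_neq0 //; lra.
have c2 : a_ eps beta M N = 2*eps/r^+2 + 2*eps/(p*q) + 1/p + beta by rewrite /a_ -/p -/q -/r.
have ce2 : `|e_ eps M| = 2 * eps / (q * (p + q)) by rewrite /e_ -/p -/q normrN ger0_norm // ltW.
have cd2 : `|d_ eps M| = 2 * eps / (p * (p + q)) + 1/p by rewrite /d_ -/p -/q nnorm // ltW.
have ne2 : e_ eps M != 0 by rewrite /e_ -/p -/q ltr0_neq0 // oppr_lt0.
have nd2 : d_ eps M != 0 by rewrite /d_ -/p -/q ltr0_neq0 //; lra.
have c3 : a_h eps beta M N = 2*eps/r^+2 + 2*eps/q^+2 + 1/q + beta by rewrite /a_h -/q -/r.
have ce3 : `|e_h eps M| = eps/q^+2 by rewrite /e_h -/q normrN ger0_norm // ltW.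
have cd3 : `|d_h eps M| = eps/q^+2 + 1/q by rewrite /d_h -/q nnorm // ltW.
have ne3 : e_h eps M != 0 by rewrite /e_h -/q ltr0_neq0 // oppr_lt0.
have nd3 : d_h eps M != 0 by rewrite /d_h -/q ltr0_neq0 //; lra.
have [HA1 HB1 HC1 HN1 HM1] := @case_lemma R N.-1 (a_H eps beta M N) (offd eps N) (e_H eps M) (d_H eps M)
  ltac:(rewrite c1; lra) ltac:(rewrite c1 hoff; lra) ltac:(rewrite c1 hoff ce1 cd1; lra) ne1 nd1.
have [HA2 HB2 HC2 HN2 HM2] := @case_lemma R N.-1 (a_ eps beta M N) (offd eps N) (e_ eps M) (d_ eps M)
  ltac:(rewrite c2; lra) ltac:(rewrite c2 hoff; lra) ltac:(rewrite c2 hoff ce2 cd2; lra) ne2 nd2.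
have [HA3 HB3 HC3 HN3 HM3] := @case_lemma R N.-1 (a_h eps beta M N) (offd eps N) (e_h eps M) (d_h eps M)
  ltac:(rewrite c3; lra) ltac:(rewrite c3 hoff; lra) ltac:(rewrite c3 hoff ce3 cd3; lra) ne3 nd3.
by split; split.
Qed.
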